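(* Let $x$ be a fixed real (or complex) number and let $\kappa_x:\mathbb{Z}_{>0}\to\mathbb{C}$ be the recursive divisor function defined by $$\kappa_x(n) = n^x + \sum_{d \mid n,\ d<n} \kappa_x(d)\qquad (n\ge 1).$$ Then, as an identity of Dirichlet series in $s$ (in particular for all complex $s$ with real part sufficiently large that both sides converge absolutely), $$\sum_{n=1}^\infty \frac{\kappa_x(n)}{n^s} = \frac{\zeta(s-x)}{2-\zeta(s)},$$ where $\zeta$ is the Riemann zeta function.
   Context: For $n=1$ the sum over $d\mid n$, $d<n$ is empty, so $\kappa_x(1)=1$. $\zeta(s)=\sum_{n\ge1} n^{-s}$. *)

(* Defs.v *)
From Stdlib Require Import Reals List Arith.
From Coquelicot Require Import Coquelicot.
Import ListNotations.
Open Scope R_scope.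

(* n ^ z for a positive natural n and complex z (principal value):
   n^z = exp(z ln n) = e^{Re z ln n} (cos(Im z ln n) + i sin(Im z ln n)). *)
Definition cpow_nat (n : nat) (z : C) : C :=
  (exp (Re z * ln (INR n)) * cos (Im z * ln (INR n)),
   exp (Re z * ln (INR n)) * sin (Im z * ln (INR n))).

Definition proper_divisors (n : nat) : list nat :=
  filter (fun d => Nat.eqb (n mod d) 0) (seq 1 (n - 1)).

Definition Csum (l : list C) : C := fold_right Cplus (RtoC 0) l.

(* kappa satisfies the recursion kappa(n) = n^x + sum_{d | n, d < n} kappa(d), n >= 1
   (this determines kappa uniquely on positive integers). *)
Definition is_kappa (x : C) (kappa : nat -> C) : Prop :=
  forall n : nat, (1 <= n)%nat ->
    kappa n = Cplus (cpow_nat n x) (Csum (map kappa (proper_divisors n))).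

(* The n-th term (n >= 1, indexed from k = n - 1) of the Dirichlet series sum a(n) n^{-s}. *)
Definition dir_term (a : nat -> C) (s : C) (k : nat) : C :=
  Cmult (a (S k)) (cpow_nat (S k) (Copp s)).

(* Riemann zeta via its Dirichlet series sum_{n>=1} n^{-s}
   (real and imaginary parts summed separately; meaningful for Re s > 1). *)
Definition zeta (s : C) : C :=
  (Series (fun k => Re (dir_term (fun _ => RtoC 1) s k)),
   Series (fun k => Im (dir_term (fun _ => RtoC 1) s k))).

(* Main.v *)
Require Import Defs.
From Stdlib Require Import Reals List Arith Lia Lra.
From Coquelicot Require Import Coquelicot.
Import ListNotations.
Open Scope R_scope.

Definition sumL {G : AbelianMonoid} (l : list nat) (f : nat -> G) : G :=
  fold_right (fun k acc => plus (f k) acc) zero l.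

Lemma sumL_nil {G : AbelianMonoid} (f : nat -> G) : sumL [] f = zero.
Proof. reflexivity. Qed.
Lemma sumL_cons {G : AbelianMonoid} k l (f : nat -> G) :
  sumL (k :: l) f = plus (f k) (sumL l f).
Proof. reflexivity. Qed.
Lemma sumL_app {G : AbelianMonoid} l1 l2 (f : nat -> G) :
  sumL (l1 ++ l2) f = plus (sumL l1 f) (sumL l2 f).
Proof.
  induction l1; simpl. now rewrite plus_zero_l.
  change (plus (f a) (sumL (l1 ++ l2) f) = plus (plus (f a) (sumL l1 f)) (sumL l2 f)).
  now rewrite IHl1, plus_assoc.
Qed.
Lemma sumL_ext {G : AbelianMonoid} l (f g : nat -> G) :
  (forall k, In k l -> f k = g k) -> sumL l f = sumL l g.
Proof.
  induction l; intros H; simpl. reflexivity.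
  change (plus (f a) (sumL l f) = plus (g a) (sumL l g)).
  rewrite H by (left; auto). rewrite IHl; auto. intros; apply H; right; auto.
Qed.
Lemma sumL_plus {G : AbelianMonoid} l (f g : nat -> G) :
  sumL l (fun k => plus (f k) (g k)) = plus (sumL l f) (sumL l g).
Proof.
  induction l; simpl. now rewrite plus_zero_l.
  change (plus (plus (f a) (g a)) (sumL l (fun k => plus (f k) (g k)))
   = plus (plus (f a) (sumL l f)) (plus (g a) (sumL l g))).
  rewrite IHl.
  rewrite <- !plus_assoc. f_equal. rewrite !plus_assoc. f_equal. apply plus_comm.
Qed.
Lemma sumL_zero {G : AbelianMonoid} l : sumL (G:=G) l (fun _ => zero) = zero.
Proof. induction l; simpl. auto. change (plus (G:=G) zero (sumL l (fun _ => zero)) = zero).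
  rewrite IHl; apply plus_zero_l. Qed.
Lemma sumL_filter {G : AbelianMonoid} (p : nat -> bool) l (f : nat -> G) :
  sumL (filter p l) f = sumL l (fun k => if p k then f k else zero).
Proof.
  induction l; simpl. auto.
  destruct (p a); simpl.
  change (plus (f a) (sumL (filter p l) f) = plus (f a) (sumL l (fun k => if p k then f k else zero))).
  now rewrite IHl.
  change (sumL (filter p l) f = plus zero (sumL l (fun k => if p k then f k else zero))).
  now rewrite IHl, plus_zero_l.
Qed.

Open Scope nat_scope.
Lemma div_S_nodiv N d : (0 < d)%nat -> (S N mod d <> 0)%nat -> (S N / d = N / d)%nat.
Proof.
  intros Hd Hm.
  pose proof (Nat.div_mod_eq N d) as E. pose proof (Nat.mod_bound_pos N d ltac:(lia) Hd) as B.
  set (q := N / d) in *. set (r := N mod d) in *.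
  destruct (Nat.eq_dec (S r) d) as [e|e].
  - exfalso. apply Hm. symmetry. apply Nat.mod_unique with (q := S q); lia.
  - symmetry. apply Nat.div_unique with (r := S r); lia.
Qed.

Lemma div_S_div N d : (0 < d)%nat -> (d <= N)%nat -> (S N mod d = 0)%nat ->
  (S N / d = S (N / d) /\ 1 <= N / d)%nat.
Proof.
  intros Hd HdN Hm.
  pose proof (Nat.div_mod_eq (S N) d) as E. rewrite Hm in E.
  set (q := S N / d) in *.
  destruct q as [|q']. lia.
  assert (N = d * q' + (d - 1))%nat by nia.
  assert (N / d = q')%nat. { symmetry; apply Nat.div_unique with (r := (d-1)%nat); lia. }
  split. lia. destruct q'. nia. lia.
Qed.

Close Scope nat_scope.
Definition inner {G : AbelianMonoid} (F : nat -> nat -> G) N d :=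
  sumL (seq 2 (N / d - 1)) (fun m => F d (d * m)%nat).

Lemma inner_step {G : AbelianMonoid} (F : nat -> nat -> G) N d :
  (1 <= d <= N)%nat ->
  inner F (S N) d = plus (inner F N d)
     (if Nat.eqb (S N mod d) 0 then F d (S N) else zero).
Proof.
  intros Hd. unfold inner.
  destruct (Nat.eqb_spec (S N mod d) 0) as [e|e].
  - destruct (div_S_div N d ltac:(lia) ltac:(lia) e) as [h1 h2].
    rewrite h1. replace (S (N/d) - 1)%nat with (S (N/d - 1)) by lia.
    rewrite seq_S, sumL_app. f_equal. simpl.
    change (plus (F d (d * (2 + (N / d - 1)))%nat) zero = F d (S N)).
    rewrite plus_zero_r. f_equal.
    pose proof (Nat.div_mod_eq (S N) d) as E. rewrite e, h1 in E. replace (2 + (N / d - 1))%nat with (S (N / d)) by lia. lia.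
  - rewrite div_S_nodiv by lia. now rewrite plus_zero_r.
Qed.

Lemma swap {G : AbelianMonoid} (F : nat -> nat -> G) N :
  sumL (seq 1 N) (fun n => sumL (proper_divisors n) (fun d => F d n))
  = sumL (seq 1 N) (inner F N).
Proof.
  induction N. reflexivity.
  rewrite seq_S, !sumL_app, IHN.
  simpl (sumL [1 + N]%nat _).
  assert (Hz : inner F (S N) (S N) = zero).
  { unfold inner. rewrite Nat.div_same by lia. reflexivity. }
  change (1 + N)%nat with (S N). rewrite Hz.
  rewrite (sumL_ext (seq 1 N) (inner F (S N)) (fun d => plus (inner F N d)
     (if Nat.eqb (S N mod d) 0 then F d (S N) else zero))).
  2:{ intros k Hk. apply in_seq in Hk. apply inner_step. lia. }
  rewrite sumL_plus. rewrite <- plus_assoc. f_equal.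
  unfold proper_divisors. replace (S N - 1)%nat with N by lia.
  rewrite sumL_filter. rewrite !plus_zero_r. reflexivity.
Qed.


Lemma cpow_add n a b : cpow_nat n (Cplus a b) = Cmult (cpow_nat n a) (cpow_nat n b).
Proof.
  unfold cpow_nat, Cmult; simpl; unfold Re, Im; simpl.
  rewrite !Rmult_plus_distr_r, exp_plus, cos_plus, sin_plus.
  f_equal; ring.
Qed.

Lemma cpow_mul d m z : (0 < d)%nat -> (0 < m)%nat ->
  cpow_nat (d * m) z = Cmult (cpow_nat d z) (cpow_nat m z).
Proof.
  intros Hd Hm. unfold cpow_nat, Cmult; simpl; unfold Re, Im; simpl.
  rewrite mult_INR, ln_mult by (apply lt_0_INR; lia).
  rewrite !Rmult_plus_distr_l, exp_plus, cos_plus, sin_plus.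
  f_equal; ring.
Qed.

Lemma cpow_one z : cpow_nat 1 z = RtoC 1.
Proof.
  unfold cpow_nat. simpl. rewrite ln_1, !Rmult_0_r, exp_0, cos_0, sin_0.
  unfold RtoC. f_equal; ring.
Qed.

Lemma cpow_mod n z : Cmod (cpow_nat n z) = exp (Re z * ln (INR n)).
Proof.
  unfold cpow_nat, Cmod; cbn [fst snd].
  set (E := exp _). set (t := Im z * _).
  replace ((E * cos t) ^ 2 + (E * sin t) ^ 2) with (E ^ 2 * (sin t ^ 2 + cos t ^ 2)) by ring.
  rewrite <- !Rsqr_pow2, sin2_cos2, Rmult_1_r.
  apply sqrt_Rsqr. unfold E. left; apply exp_pos.
Qed.

Lemma exp_bound n (p : R) k : (1 <= n)%nat -> p <= - INR k ->
  exp (p * ln (INR n)) <= / (INR n ^ k).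
Proof.
  intros Hn Hp.
  assert (Hl : 0 <= ln (INR n)).
  { rewrite <- ln_1. destruct (Nat.eq_dec n 1). subst. simpl; lra.
    left. apply ln_increasing. lra. apply lt_1_INR. lia. }
  assert (Hpos : 0 < INR n) by (apply lt_0_INR; lia).
  replace (/ INR n ^ k) with (exp (- INR k * ln (INR n))).
  - destruct (Rle_lt_or_eq_dec _ _ (Rmult_le_compat_r _ _ _ Hl Hp)) as [h|h].
    left; apply exp_increasing; auto. rewrite h; lra.
  - rewrite Ropp_mult_distr_l_reverse, exp_Ropp, <- ln_pow by auto.
    rewrite exp_ln; auto. apply pow_lt; auto.
Qed.

Lemma sumL_R_le l (f g : nat -> R) : (forall k, In k l -> f k <= g k) ->
  sumL l f <= sumL l g.
Proof.
  induction l; intros H; simpl. apply Rle_refl.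
  change (f a + sumL l f <= g a + sumL l g).
  apply Rplus_le_compat. apply H; left; auto. apply IHl; intros; apply H; right; auto.
Qed.
Lemma sumL_R_nonneg l (f : nat -> R) : (forall k, In k l -> 0 <= f k) -> 0 <= sumL l f.
Proof.
  intros H. replace 0 with (sumL (G:=R_AbelianMonoid) l (fun _ => 0)).
  apply sumL_R_le; auto. exact (sumL_zero (G:=R_AbelianMonoid) l).
Qed.
Lemma sumL_R_scal l (f : nat -> R) c : sumL l (fun k => c * f k) = c * sumL l f.
Proof.
  induction l; simpl. change (0 = c * 0); ring.
  change (c * f a + sumL l (fun k => c * f k) = c * (f a + sumL l f)).
  rewrite IHl; ring.
Qed.
Lemma sumL_R_scal_r l (f : nat -> R) c : sumL l (fun k => f k * c) = sumL l f * c.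
Proof.
  rewrite Rmult_comm, <- sumL_R_scal. apply sumL_ext. intros k _. apply Rmult_comm.
Qed.

Lemma sum_inv_sq M : sumL (seq 2 M) (fun m => / (INR m ^ 2)) <= 1 - / INR (M + 1).
Proof.
  induction M.
  - simpl. change (0 <= 1 - / 1). lra.
  - rewrite seq_S, sumL_app. simpl (sumL [2 + M]%nat _).
    change (sumL (seq 2 M) (fun m : nat => / INR m ^ 2) + (/ INR (2 + M) ^ 2 + 0)
      <= 1 - / INR (S M + 1)).
    replace (S M + 1)%nat with (2 + M)%nat by lia.
    rewrite !plus_INR in *. simpl INR in *.
    assert (t0 : 0 <= INR M) by apply pos_INR. set (t := INR M) in *.
    assert (0 < / ((t + 1) * (1 + 1 + t) ^ 2)) by (apply Rinv_0_lt_compat; nra).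
    assert (Hq : / (t+1) - / (1 + 1 + t) - / (1 + 1 + t) ^ 2 = / ((t + 1) * (1 + 1 + t) ^ 2) ).
    { field. lra. }
    replace (INR M + 1) with (t + 1) in IHM by reflexivity.
    lra.
Qed.


Lemma Csum_sumL l (k : nat -> C) : Csum (map k l) = sumL l k.
Proof. induction l; simpl; auto. rewrite IHl. reflexivity. Qed.

Lemma sumL_C_mult_r l (h : nat -> C) (c : C) :
  sumL l (fun k => Cmult (h k) c) = Cmult (sumL l h) c.
Proof.
  induction l; simpl. change (RtoC 0 = Cmult (RtoC 0) c). ring.
  change (Cplus (Cmult (h a) c) (sumL l (fun k => Cmult (h k) c)) = Cmult (Cplus (h a) (sumL l h)) c).
  rewrite IHl. ring.
Qed.
Lemma sumL_C_mult_l l (h : nat -> C) (c : C) :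
  sumL l (fun k => Cmult c (h k)) = Cmult c (sumL l h).
Proof.
  rewrite Cmult_comm, <- sumL_C_mult_r. apply sumL_ext. intros; apply Cmult_comm.
Qed.

Lemma Cmod_sumL l (h : nat -> C) : Cmod (sumL l h) <= sumL l (fun k => Cmod (h k)).
Proof.
  induction l; simpl. change (Cmod (RtoC 0) <= 0). rewrite Cmod_0. lra.
  change (Cmod (Cplus (h a) (sumL l h)) <= Cmod (h a) + sumL l (fun k => Cmod (h k))).
  eapply Rle_trans. apply Cmod_triangle. lra.
Qed.

Lemma sum_n_sumL {G : AbelianMonoid} (a : nat -> G) N :
  sum_n (fun k => a (S k)) N = sumL (seq 1 (S N)) a.
Proof.
  induction N. rewrite sum_O. simpl. now rewrite plus_zero_r.
  rewrite sum_Sn, IHN. rewrite (seq_S (S N) 1), sumL_app. simpl.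
  now rewrite plus_zero_r.
Qed.

Definition conv (u : nat -> C) (L : C) :=
  forall eps, 0 < eps -> exists N0, forall N, (N0 <= N)%nat -> Cmod (Cminus (u N) L) < eps.

Lemma is_series_of_conv (a : nat -> C) L :
  conv (fun M => sumL (seq 1 M) a) L -> is_series (fun k => a (S k)) L.
Proof.
  intros H. unfold is_series. apply (filterlim_locally_ball_norm (K:=C_AbsRing)).
  intros eps. destruct (H eps (cond_pos eps)) as [N0 HN].
  exists N0. intros n Hn. unfold ball_norm.
  rewrite sum_n_sumL. apply HN. lia.
Qed.

Lemma conv_of_is_series (a : nat -> C) L :
  is_series (fun k => a (S k)) L -> conv (fun M => sumL (seq 1 M) a) L.
Proof.
  intros H eps Heps. unfold is_series in H.
  destruct (proj1 (filterlim_locally_ball_norm (K:=C_AbsRing) _ _) H (mkposreal eps Heps)) as [N0 HN].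
  exists (S N0). intros N HN'. destruct N. lia.
  specialize (HN N ltac:(lia)). unfold ball_norm in HN. rewrite sum_n_sumL in HN. exact HN.
Qed.

Lemma Rabs_Im_le c : Rabs (Im c) <= Cmod c.
Proof.
  unfold Cmod. rewrite <- sqrt_Rsqr_abs. apply sqrt_le_1_alt.
  unfold Im, Rsqr. simpl. nra.
Qed.

Lemma Cmod_le_parts c : Cmod c <= Rabs (Re c) + Rabs (Im c).
Proof.
  unfold Cmod, Re, Im.
  pose proof (Rabs_pos (fst c)). pose proof (Rabs_pos (snd c)).
  rewrite <- (sqrt_Rsqr (Rabs (fst c) + Rabs (snd c))) by lra.
  apply sqrt_le_1_alt. unfold Rsqr.
  rewrite <- (pow2_abs (fst c)), <- (pow2_abs (snd c)). nra.
Qed.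

Lemma Re_sum_n (a : nat -> C) N : Re (sum_n a N) = sum_n (fun k => Re (a k)) N.
Proof.
  induction N. now rewrite !sum_O.
  rewrite !sum_Sn, <- IHN. reflexivity.
Qed.
Lemma Im_sum_n (a : nat -> C) N : Im (sum_n a N) = sum_n (fun k => Im (a k)) N.
Proof.
  induction N. now rewrite !sum_O.
  rewrite !sum_Sn, <- IHN. reflexivity.
Qed.

Lemma C_series_parts (a : nat -> C) :
  ex_series (fun k => Cmod (a k)) ->
  is_series a (Series (fun k => Re (a k)), Series (fun k => Im (a k))).
Proof.
  intros H.
  assert (HR : ex_series (fun k => Re (a k))).
  { apply (@ex_series_le R_AbsRing R_CompleteNormedModule _ (fun k => Cmod (a k))); auto.
    intros n. apply re_le_Cmod. }
  assert (HI : ex_series (fun k => Im (a k))).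
  { apply (@ex_series_le R_AbsRing R_CompleteNormedModule _ (fun k => Cmod (a k))); auto.
    intros n. apply Rabs_Im_le. }
  apply Series_correct in HR. apply Series_correct in HI.
  set (A := Series _) in HR. set (B := Series _) in HI.
  unfold is_series.
  apply (filterlim_locally_ball_norm (K:=C_AbsRing)). intros eps.
  assert (he : 0 < eps / 2) by (destruct eps; simpl; lra).
  destruct (proj1 (filterlim_locally_ball_norm (K:=R_AbsRing) _ _) HR (mkposreal _ he)) as [N1 H1].
  destruct (proj1 (filterlim_locally_ball_norm (K:=R_AbsRing) _ _) HI (mkposreal _ he)) as [N2 H2].
  exists (max N1 N2). intros n Hn. unfold ball_norm.
  specialize (H1 n ltac:(lia)). specialize (H2 n ltac:(lia)). unfold ball_norm in H1, H2.
  simpl in H1, H2.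
  eapply Rle_lt_trans. apply Cmod_le_parts.
  change (Rabs (Re (sum_n a n) - A) + Rabs (Im (sum_n a n) - B) < eps).
  rewrite Re_sum_n, Im_sum_n.
  change (Rabs (sum_n (fun k => Re (a k)) n - A) < eps / 2) in H1.
  change (Rabs (sum_n (fun k => Im (a k)) n - B) < eps / 2) in H2.
  lra.
Qed.

Lemma ex_series_pos_bounded (c : nat -> R) Mb :
  (forall k, 0 <= c k) -> (forall N, sum_n c N <= Mb) -> ex_series c.
Proof.
  intros Hp Hb. destruct (ex_finite_lim_seq_incr (sum_n c) Mb) as [l Hl].
  intros n. rewrite sum_Sn. pose proof (Hp (S n)). change (sum_n c n <= sum_n c n + c (S n)). lra.
  auto. exists l. exact Hl.
Qed.

Lemma sum_inv_sq1 N : sumL (seq 1 N) (fun m => / (INR m ^ 2)) <= 2.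
Proof.
  destruct N. simpl. change (0 <= 2). lra.
  simpl seq. rewrite sumL_cons. pose proof (sum_inv_sq N).
  assert (0 < / INR (N+1)) by (apply Rinv_0_lt_compat, lt_0_INR; lia).
  change (/ (1 ^ 2) + sumL (seq 2 N) (fun m => / (INR m ^ 2)) <= 2).
  replace (/ (1^2)) with 1 by (simpl; field). lra.
Qed.

Lemma zeta_conv (s : C) : 2 <= Re s ->
  conv (fun M => sumL (seq 1 M) (fun n => cpow_nat n (Copp s))) (zeta s).
Proof.
  intros Hs.
  set (a := dir_term (fun _ => RtoC 1) s).
  assert (Hb : forall k, Cmod (a k) <= / (INR (S k) ^ 2)).
  { intros k. unfold a, dir_term. rewrite Cmod_mult, Cmod_1, Rmult_1_l, cpow_mod.
    apply exp_bound. apply le_n_S, Nat.le_0_l. unfold Re in *; simpl in *; lra. }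
  assert (Hc : ex_series (fun k => / (INR (S k) ^ 2))).
  { apply ex_series_pos_bounded with 2.
    intros k. left. apply Rinv_0_lt_compat, pow_lt, lt_0_INR; lia.
    intros N. rewrite (sum_n_sumL (G:=R_AbelianMonoid) (fun n => / (INR n ^2))).
    apply sum_inv_sq1. }
  assert (Ha : ex_series (fun k => Cmod (a k))).
  { apply (@ex_series_le R_AbsRing R_CompleteNormedModule _ (fun k => / INR (S k) ^ 2)); [|exact Hc]. intros n.
    change (Rabs (Cmod (a n)) <= / INR (S n) ^ 2). rewrite Rabs_pos_eq by apply Cmod_ge_0. auto. }
  pose proof (C_series_parts a Ha) as H.
  apply conv_of_is_series.
  eapply is_series_ext. 2: exact H.
  intros n. unfold a, dir_term. apply Cmult_1_l.
Qed.


Lemma seq_split N M : (N <= M)%nat -> seq 1 M = seq 1 N ++ seq (1 + N) (M - N).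
Proof. intros H. rewrite <- seq_app. f_equal. lia. Qed.

Lemma sumL_R_mono (c : nat -> R) N M : (forall k, 0 <= c k) -> (N <= M)%nat ->
  sumL (seq 1 N) c <= sumL (seq 1 M) c.
Proof.
  intros Hc H. rewrite (seq_split N M H), sumL_app.
  change (sumL (seq 1 N) c <= sumL (seq 1 N) c + sumL (seq (1 + N) (M - N)) c).
  pose proof (sumL_R_nonneg (seq (1+N) (M-N)) c (fun k _ => Hc k)). lra.
Qed.

Lemma partial_le_series (c : nat -> R) L : (forall k, 0 <= c k) ->
  is_series (fun k => c (S k)) L -> forall N, sumL (seq 1 N) c <= L.
Proof.
  intros Hc HL N. destruct (Rle_or_lt (sumL (seq 1 N) c) L) as [h|h]; auto. exfalso.
  assert (he : 0 < sumL (seq 1 N) c - L) by lra.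
  destruct (proj1 (filterlim_locally_ball_norm (K:=R_AbsRing) _ _) HL (mkposreal _ he)) as [N1 H1].
  specialize (H1 (max N1 N) ltac:(lia)). unfold ball_norm in H1. simpl in H1.
  rewrite (sum_n_sumL (G:=R_AbelianMonoid)) in H1.
  change (Rabs (sumL (seq 1 (S (max N1 N))) c - L) < sumL (seq 1 N) c - L) in H1.
  pose proof (sumL_R_mono c N (S (max N1 N)) Hc ltac:(lia)).
  apply Rabs_def2 in H1. lra.
Qed.

Lemma series_tail (c : nat -> R) : (forall k, 0 <= c k) ->
  ex_series (fun k => c (S k)) -> forall eps, 0 < eps -> exists D, forall N, (D <= N)%nat ->
  sumL (seq (1 + D) (N - D)) c <= eps.
Proof.
  intros Hc [L HL] eps Heps.
  destruct (proj1 (filterlim_locally_ball_norm (K:=R_AbsRing) _ _) HL (mkposreal _ Heps)) as [N1 H1].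
  exists (S N1). intros N HN.
  specialize (H1 N1 (le_n _)). unfold ball_norm in H1. simpl in H1.
  rewrite (sum_n_sumL (G:=R_AbelianMonoid)) in H1.
  change (Rabs (sumL (seq 1 (S N1)) c - L) < eps) in H1.
  pose proof (partial_le_series c L Hc HL N).
  rewrite (seq_split (S N1) N HN), sumL_app in H.
  change (sumL (seq 1 (S N1)) c + sumL (seq (1 + S N1) (N - S N1)) c <= L) in H.
  apply Rabs_def2 in H1. lra.
Qed.

Lemma conv_bound (u : nat -> C) L c : conv u L -> (forall N, Cmod (u N) <= c) -> Cmod L <= c.
Proof.
  intros H Hb. destruct (Rle_or_lt (Cmod L) c) as [h|h]; auto. exfalso.
  assert (he : 0 < Cmod L - c) by lra.
  destruct (H _ he) as [N0 HN]. specialize (HN N0 (le_n _)). specialize (Hb N0).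
  assert (Cmod L <= Cmod (u N0) + Cmod (Cminus (u N0) L)).
  { rewrite <- Cmod_opp with (x := Cminus (u N0) L).
    replace L with (Cplus (u N0) (Copp (Cminus (u N0) L))) at 1 by ring.
    apply Cmod_triangle. }
  lra.
Qed.


Ltac Cring := match goal with |- ?a = ?b => change (@eq C a b) end; ring.

Lemma alg_lemma (T G R Z : C) :
  T = Cplus G (Cplus (Cmult T (Cminus Z (RtoC 1))) R) ->
  Cmult T (Cminus (RtoC 2) Z) = Cplus G R.
Proof.
  intros H. assert (H2 : RtoC 2 = Cplus (RtoC 1) (RtoC 1)) by (rewrite <- RtoC_plus; f_equal; ring).
  assert (HG : G = Cminus (Cminus T (Cmult T (Cminus Z (RtoC 1)))) R).
  { rewrite H at 1. ring. }
  rewrite HG, H2. ring.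
Qed.

Lemma alg_lemma2 (T G R Zx D : C) : D <> RtoC 0 ->
  Cmult T D = Cplus G R ->
  Cminus T (Cdiv Zx D) = Cdiv (Cplus (Cminus G Zx) R) D.
Proof.
  intros Hd H.
  replace (Cplus (Cminus G Zx) R) with (Cminus (Cmult T D) Zx) by (rewrite H; ring).
  field. exact Hd.
Qed.

Theorem theorem1 (x : C) (kappa : nat -> C) :
  is_kappa x kappa ->
  exists sigma0 : R, forall s : C, sigma0 < Re s ->
    ex_series (fun k => Cmod (dir_term kappa s k)) /\
    Cminus (RtoC 2) (zeta s) <> RtoC 0 /\
    is_series (dir_term kappa s)
      (Cdiv (zeta (Cminus s x)) (Cminus (RtoC 2) (zeta s))).
Proof.
  intros Hk. exists (Rabs (Re x) + 3). intros s Hs.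
  pose proof (Rle_abs (Re x)) as Hax. pose proof (Rabs_pos (Re x)) as Hax0.
  set (w := fun n => cpow_nat n (Copp s)).
  set (e := fun n => Cmod (w n)).
  set (f := fun n => Cmult (kappa n) (w n)).
  set (b := fun n => Cmod (f n)).
  set (g := fun n => cpow_nat n (Copp (Cminus s x))).
  assert (He_pos : forall n, 0 <= e n) by (intros; apply Cmod_ge_0).
  assert (Hb_pos : forall n, 0 <= b n) by (intros; apply Cmod_ge_0).
  assert (He_bd : forall n, (1 <= n)%nat -> e n <= / INR n ^ 3).
  { intros n Hn. unfold e, w. rewrite cpow_mod. apply exp_bound; auto.
    replace (Re (Copp s)) with (- Re s) by reflexivity.
    replace (INR 3) with 3 by (simpl; ring). lra. }
  assert (Hg_bd : forall n, (1 <= n)%nat -> Cmod (g n) <= / INR n ^ 2).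
  { intros n Hn. unfold g. rewrite cpow_mod. apply exp_bound; auto.
    replace (Re (Copp (Cminus s x))) with (- (Re s - Re x)) by (unfold Re; simpl; ring).
    replace (INR 2) with 2 by (simpl; ring). lra. }
  assert (Hg_eq : forall n, g n = Cmult (cpow_nat n x) (w n)).
  { intros n. unfold g, w. rewrite <- cpow_add. f_equal. ring. }
  assert (Hw_mul : forall d m, (1 <= d)%nat -> (1 <= m)%nat -> w (d * m)%nat = Cmult (w d) (w m)).
  { intros d m Hd Hm. unfold w. apply cpow_mul; lia. }
  assert (He_sum : forall K, sumL (seq 2 K) e <= / 2).
  { intros K. eapply Rle_trans.
    apply (sumL_R_le _ _ (fun m => / 2 * / (INR m ^ 2))).
    { intros m Hm. apply in_seq in Hm.
      assert (h2 : 2 <= INR m) by (replace 2 with (INR 2) by (simpl; ring); apply le_INR; lia).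
      eapply Rle_trans. apply He_bd; lia.
      replace (/ INR m ^ 3) with (/ INR m * / (INR m ^ 2)) by (field; lra).
      apply Rmult_le_compat_r. left; apply Rinv_0_lt_compat; apply pow_lt; lra.
      apply Rinv_le_contravar; lra. }
    rewrite sumL_R_scal. pose proof (sum_inv_sq K).
    assert (0 < / INR (K+1)) by (apply Rinv_0_lt_compat, lt_0_INR; lia).
    pose proof (sumL_R_nonneg (seq 2 K) (fun m => / (INR m ^ 2))).
    assert (0 <= sumL (seq 2 K) (fun m => / (INR m ^ 2))).
    { apply H1. intros k Hk'. apply in_seq in Hk'. left. apply Rinv_0_lt_compat, pow_lt, lt_0_INR; lia. }
    lra. }
  assert (Hrec : forall n, (1 <= n)%nat ->
    f n = Cplus (g n) (sumL (proper_divisors n) (fun d => Cmult (kappa d) (w n)))).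
  { intros n Hn. unfold f. rewrite (Hk n Hn), Csum_sumL, Hg_eq, sumL_C_mult_r. ring. }
  assert (Hrec_abs : forall n, (1 <= n)%nat ->
    b n <= Cmod (g n) + sumL (proper_divisors n) (fun d => Cmod (kappa d) * e n)).
  { intros n Hn. unfold b, f. rewrite Cmod_mult, Hg_eq, Cmod_mult, sumL_R_scal_r.
    change (Cmod (w n)) with (e n).
    assert (H : Cmod (kappa n) <= Cmod (cpow_nat n x) + sumL (proper_divisors n) (fun d => Cmod (kappa d))).
    { rewrite (Hk n Hn), Csum_sumL. eapply Rle_trans. apply Cmod_triangle.
      apply Rplus_le_compat_l. apply Cmod_sumL. }
    pose proof (He_pos n). rewrite <- Rmult_plus_distr_r. apply Rmult_le_compat_r; auto. }
  assert (HB : forall N, sumL (seq 1 N) b <= 4).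
  { intros N.
    assert (H1 : sumL (seq 1 N) b <= sumL (seq 1 N) (fun n => Cmod (g n)) +
       sumL (seq 1 N) (fun n => sumL (proper_divisors n) (fun d => Cmod (kappa d) * e n))).
    { eapply Rle_trans. apply (sumL_R_le _ _ (fun n => Cmod (g n) +
         sumL (proper_divisors n) (fun d => Cmod (kappa d) * e n))).
      intros n Hn. apply in_seq in Hn. apply Hrec_abs. lia.
      right. apply (sumL_plus (G:=R_AbelianMonoid)). }
    pose proof (swap (G:=R_AbelianMonoid) (fun d n => Cmod (kappa d) * e n) N) as Hsw.
    cbv beta in Hsw. rewrite Hsw in H1.
    assert (H2 : sumL (seq 1 N) (inner (G:=R_AbelianMonoid) (fun d n => Cmod (kappa d) * e n) N)
                 <= sumL (seq 1 N) (fun d => b d * / 2)).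
    { apply sumL_R_le. intros d Hd. apply in_seq in Hd. unfold inner.
      rewrite (sumL_ext _ _ (fun m => b d * e m)).
      2:{ intros m Hm. apply in_seq in Hm. unfold e, b, f. rewrite Hw_mul by lia.
          rewrite !Cmod_mult. symmetry. apply Rmult_assoc. }
      rewrite sumL_R_scal. apply Rmult_le_compat_l; auto. }
    rewrite sumL_R_scal_r in H2.
    assert (H3 : sumL (seq 1 N) (fun n => Cmod (g n)) <= 2).
    { eapply Rle_trans. 2: apply (sum_inv_sq1 N). apply sumL_R_le.
      intros n Hn. apply in_seq in Hn. apply Hg_bd. lia. }
    lra. }
  assert (Hex : ex_series (fun k => b (S k))).
  { apply ex_series_pos_bounded with 4. intros; apply Hb_pos.
    intros N. rewrite (sum_n_sumL (G:=R_AbelianMonoid)). apply HB. }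
  set (Z := zeta s). set (Zx := zeta (Cminus s x)).
  assert (HZ : conv (fun M => sumL (seq 1 M) w) Z).
  { apply zeta_conv. lra. }
  assert (HZx : conv (fun M => sumL (seq 1 M) g) Zx).
  { apply zeta_conv. replace (Re (Cminus s x)) with (Re s - Re x) by (unfold Re; simpl; ring). lra. }
  assert (Hw1 : w 1%nat = RtoC 1) by apply cpow_one.
  set (W2 := fun M => sumL (seq 2 (M - 1)) w).
  assert (HW2 : forall M, (1 <= M)%nat -> sumL (seq 1 M) w = Cplus (RtoC 1) (W2 M)).
  { intros M HM. destruct M. lia. unfold W2. simpl seq. rewrite sumL_cons, Hw1.
    rewrite ?Nat.sub_0_r. reflexivity. }
  assert (HW2bd : forall M, Cmod (W2 M) <= / 2).
  { intros M. eapply Rle_trans. apply Cmod_sumL. apply He_sum. }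
  assert (HW2conv : conv W2 (Cminus Z (RtoC 1))).
  { intros eps Heps. destruct (HZ eps Heps) as [N0 HN0]. exists (max N0 1). intros N HN.
    replace (Cminus (W2 N) (Cminus Z (RtoC 1))) with (Cminus (sumL (seq 1 N) w) Z).
    apply HN0; lia. rewrite HW2 by lia. ring. }
  assert (HZ1 : Cmod (Cminus Z (RtoC 1)) <= / 2) by (apply (conv_bound _ _ _ HW2conv HW2bd)).
  assert (H2 : RtoC 2 = Cplus (RtoC 1) (RtoC 1)) by (rewrite <- RtoC_plus; f_equal; ring).
  assert (Hnz : / 2 <= Cmod (Cminus (RtoC 2) Z)).
  { assert (H : Cmod (RtoC 1) <= Cmod (Cminus (RtoC 2) Z) + Cmod (Cminus Z (RtoC 1))).
    { replace (RtoC 1) with (Cplus (Cminus (RtoC 2) Z) (Cminus Z (RtoC 1))) at 1.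
      apply Cmod_triangle. rewrite H2. ring. }
    rewrite Cmod_1 in H. lra. }
  assert (Dnz : Cminus (RtoC 2) Z <> RtoC 0).
  { intros h. rewrite h, Cmod_0 in Hnz. lra. }
  set (E := fun M => Cminus (W2 M) (Cminus Z (RtoC 1))).
  assert (HEbd : forall M, Cmod (E M) <= 1).
  { intros M. unfold E. unfold Cminus at 1. eapply Rle_trans. apply Cmod_triangle.
    rewrite Cmod_opp. pose proof (HW2bd M). lra. }
  set (RN := fun N => sumL (seq 1 N) (fun d => Cmult (f d) (E (N / d)%nat))).
  assert (HT : forall N, sumL (seq 1 N) f = Cplus (sumL (seq 1 N) g)
       (sumL (seq 1 N) (fun d => Cmult (f d) (W2 (N / d)%nat)))).
  { intros N.
    rewrite (sumL_ext _ f (fun n => Cplus (g n) (sumL (proper_divisors n) (fun d => Cmult (kappa d) (w n))))).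
    2:{ intros n Hn. apply in_seq in Hn. apply Hrec. lia. }
    etransitivity. apply (sumL_plus (G:=C_AbelianMonoid)). apply (f_equal2 Cplus). reflexivity.
    pose proof (swap (G:=C_AbelianMonoid) (fun d n => Cmult (kappa d) (w n)) N) as Hsw.
    cbv beta in Hsw. rewrite Hsw. apply sumL_ext. intros d Hd. apply in_seq in Hd. unfold inner.
    rewrite (sumL_ext _ _ (fun m => Cmult (f d) (w m))).
    apply sumL_C_mult_l.
    intros m Hm. apply in_seq in Hm. rewrite Hw_mul by lia. unfold f. Cring. }
  assert (HTZ : forall N, Cmult (sumL (seq 1 N) f) (Cminus (RtoC 2) Z) = Cplus (sumL (seq 1 N) g) (RN N)).
  { intros N. pose proof (HT N) as HT'.
    rewrite (sumL_ext _ (fun d => Cmult (f d) (W2 (N / d)%nat))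
       (fun d => Cplus (Cmult (f d) (Cminus Z (RtoC 1))) (Cmult (f d) (E (N / d)%nat)))) in HT'.
    2:{ intros d _. unfold E. Cring. }
    rewrite (sumL_plus (G:=C_AbelianMonoid)) in HT'.
    rewrite (sumL_C_mult_r _ f) in HT'.
    fold (RN N) in HT'.
    apply alg_lemma. exact HT'. }
  assert (HR : forall eps, 0 < eps -> exists N0, forall N, (N0 <= N)%nat -> Cmod (RN N) <= eps).
  { intros eps Heps.
    assert (he : 0 < eps / 5) by lra.
    destruct (HW2conv _ he) as [M0 HM0].
    destruct (series_tail b Hb_pos Hex _ he) as [D HD].
    exists (D * M0 + D)%nat. intros N HN.
    unfold RN. eapply Rle_trans. apply Cmod_sumL.
    rewrite (seq_split D N) by lia. rewrite sumL_app.
    change (sumL (seq 1 D) (fun d => Cmod (Cmult (f d) (E (N / d)%nat))) +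
            sumL (seq (1 + D) (N - D)) (fun d => Cmod (Cmult (f d) (E (N / d)%nat))) <= eps).
    assert (P1 : sumL (seq 1 D) (fun d => Cmod (Cmult (f d) (E (N / d)%nat))) <= 4 * (eps / 5)).
    { eapply Rle_trans. apply (sumL_R_le _ _ (fun d => b d * (eps / 5))).
      intros d Hd. apply in_seq in Hd. rewrite Cmod_mult.
      apply Rmult_le_compat_l. apply Hb_pos. left. apply HM0.
      apply Nat.div_le_lower_bound. lia. nia.
      rewrite sumL_R_scal_r. pose proof (HB D). nra. }
    assert (P2 : sumL (seq (1 + D) (N - D)) (fun d => Cmod (Cmult (f d) (E (N / d)%nat))) <= eps / 5).
    { eapply Rle_trans. 2: apply (HD N); lia. apply sumL_R_le.
      intros d _. rewrite Cmod_mult. pose proof (HEbd (N / d)%nat). pose proof (Hb_pos d).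
      change (Cmod (f d)) with (b d). nra. }
    lra. }
  split. exact Hex.
  split. exact Dnz.
  change (is_series (fun k => f (S k)) (Cdiv Zx (Cminus (RtoC 2) Z))).
  apply is_series_of_conv. intros eps Heps.
  set (c := Cmod (Cminus (RtoC 2) Z)).
  assert (hc : 0 < c) by (unfold c; lra).
  destruct (HZx (eps * c / 2)) as [N1 HN1]. nra.
  destruct (HR (eps * c / 4)) as [N2 HN2]. nra.
  exists (max N1 N2). intros N HN.
  specialize (HN1 N ltac:(lia)). specialize (HN2 N ltac:(lia)).
  pose proof (HTZ N) as HTZN.
  assert (Eq : Cminus (sumL (seq 1 N) f) (Cdiv Zx (Cminus (RtoC 2) Z))
     = Cdiv (Cplus (Cminus (sumL (seq 1 N) g) Zx) (RN N)) (Cminus (RtoC 2) Z)).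
  { apply alg_lemma2; auto. }
  rewrite Eq, Cmod_div by exact Dnz. fold c.
  assert (Hn : Cmod (Cplus (Cminus (sumL (seq 1 N) g) Zx) (RN N)) < eps * c).
  { eapply Rle_lt_trans. apply Cmod_triangle. cbv beta in HN1. assert (0 < eps * c) by nra. lra. }
  apply Rmult_lt_reg_r with c; auto. unfold Rdiv. rewrite Rmult_assoc, Rinv_l, Rmult_1_r by lra.
  exact Hn.
Qed.
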